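(* Let $\lambda$ be a singular cardinal of cofinality $\kappa$ and $\vec\lambda=\langle\lambda_i:i<\kappa\rangle$ a strictly increasing sequence of regular cardinals converging to $\lambda$. Then $\mathbb G(\vec\lambda)$ is $\kappa^+$-directed closed.
   Context: For $f,g:\kappa\to\mathrm{ON}$, $f<^*g$ means there is $j<\kappa$ with $f(i)<g(i)$ for all $i\ge j$. Given a $<^*$-increasing sequence $\langle f_\gamma:\gamma<\beta\rangle$ in $\prod_{i<\kappa}\lambda_i$, $\beta$ is a good point if there are an unbounded $A\subseteq\beta$ of order type $\mathrm{cf}(\beta)$ and $j<\kappa$ such that for all $i\ge j$, $\langle f_\gamma(i):\gamma\in A\rangle$ is strictly increasing. $\mathbb G(\vec\lambda)$ consists of sequences $\langle f_\beta:\beta\le\alpha\rangle$ with $\alpha<\lambda^+$ such that for all $\beta\le\alpha$: $f_\beta\in\prod_{i<\kappa}\lambda_i$; $f_\gamma<^*f_\beta$ for all $\gamma<\beta$; and if $\mathrm{cf}(\beta)>\kappa$ then $\beta$ is a good point of $\langle f_\gamma:\gamma<\beta\rangle$. The order is end-extension: $p\le q$ iff $p\upharpoonright\mathrm{dom}(q)=q$. *)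

(* Defs.v *)
(* Ordinals are modelled as elements of an arbitrary well-ordered
   type O (any initial segment of ON large enough to contain lambda^+). *)
From Stdlib Require Import Classical.
Set Implicit Arguments.

Record WOrd := {
  carrier :> Type;
  olt : carrier -> carrier -> Prop;
  olt_irrefl : forall x, ~ olt x x;
  olt_trans : forall x y z, olt x y -> olt y z -> olt x z;
  olt_total : forall x y, olt x y \/ x = y \/ olt y x;
  olt_wf : well_founded olt }.
Arguments olt {w} _ _.

Definition ole {O : WOrd} (x y : O) : Prop := olt x y \/ x = y.

Definition seg {O : WOrd} (a : O) : Type := {x : O | olt x a}.

Definition inj_into (A B : Type) : Prop :=
  exists f : A -> B, forall x y, f x = f y -> x = y.

Definition is_cardinal {O : WOrd} (a : O) : Prop :=
  forall b, olt b a -> ~ inj_into (seg a) (seg b).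
Definition is_infinite {O : WOrd} (a : O) : Prop := inj_into nat (seg a).

Definition sub_below {O : WOrd} (A : O -> Prop) (b : O) : Prop :=
  forall x, A x -> olt x b.
Definition unbounded_in {O : WOrd} (A : O -> Prop) (b : O) : Prop :=
  forall x, olt x b -> exists y, A y /\ ole x y.

Definition has_order_type {O : WOrd} (A : O -> Prop) (g : O) : Prop :=
  exists f : {x : O | A x} -> seg g,
    (forall y : seg g, exists x, f x = y) /\
    (forall x y, olt (proj1_sig x) (proj1_sig y) <->
                 olt (proj1_sig (f x)) (proj1_sig (f y))).

Definition cofinal_type {O : WOrd} (b g : O) : Prop :=
  exists A, sub_below A b /\ unbounded_in A b /\ has_order_type A g.

Definition cof_is {O : WOrd} (b g : O) : Prop :=
  cofinal_type b g /\ forall d, olt d g -> ~ cofinal_type b d.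

Definition regular_cardinal {O : WOrd} (a : O) : Prop :=
  is_cardinal a /\ is_infinite a /\ cof_is a a.

Definition singular_cardinal_of_cof {O : WOrd} (lambda kappa : O) : Prop :=
  is_cardinal lambda /\ is_infinite lambda /\ cof_is lambda kappa /\ olt kappa lambda.

Definition succ_cardinal {O : WOrd} (a ap : O) : Prop :=
  is_cardinal ap /\ olt a ap /\ forall c, is_cardinal c -> olt a c -> ole ap c.

Definition ltstar {O : WOrd} {k : O} (f g : seg k -> O) : Prop :=
  exists j : seg k, forall i : seg k,
    ole (proj1_sig j) (proj1_sig i) -> olt (f i) (g i).

(* a (partial) sequence <f_b : b in dom> of functions kappa -> ON *)
Definition Cond {O : WOrd} (k : O) : Type := O -> option (seg k -> O).

Definition good_point {O : WOrd} {k : O} (p : Cond k) (b : O) : Prop :=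
  exists (A : O -> Prop) (j : seg k),
    sub_below A b /\ unbounded_in A b /\
    (exists c, cof_is b c /\ has_order_type A c) /\
    forall i : seg k, ole (proj1_sig j) (proj1_sig i) ->
      forall g g' fg fg', A g -> A g' -> olt g g' ->
        p g = Some fg -> p g' = Some fg' -> olt (fg i) (fg' i).

Definition inG {O : WOrd} {k : O} (lam : seg k -> O) (lp : O) (p : Cond k) : Prop :=
  exists a, olt a lp /\
    (forall b, p b <> None <-> ole b a) /\
    forall b f, p b = Some f ->
      (forall i, olt (f i) (lam i)) /\
      (forall g f', olt g b -> p g = Some f' -> ltstar f' f) /\
      ((exists c, cof_is b c /\ olt k c) -> good_point p b).

(* p <= q (p stronger) iff p end-extends q *)
Definition ext {O : WOrd} {k : O} (p q : Cond k) : Prop :=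
  forall b f, q b = Some f -> p b = Some f.

(* G(lam) is kappa^+-directed closed: every directed D of size < kappa^+
   (i.e. |D| <= kappa) has a lower bound *)
Definition G_kappa_plus_directed_closed {O : WOrd} {k : O} (lam : seg k -> O) (lp : O) : Prop :=
  forall D : Cond k -> Prop,
    (forall p, D p -> inG lam lp p) ->
    (forall p q, D p -> D q -> exists r, D r /\ ext r p /\ ext r q) ->
    inj_into {p : Cond k | D p} (seg k) ->
    exists r, inG lam lp r /\ forall p, D p -> ext r p.

(* Main.v *)
Require Import Defs.
From Stdlib Require Import Classical ClassicalEpsilon FunctionalExtensionality ProofIrrelevance List Arith Lia FinFun Inverse_Image.

Lemma sig_eq {A : Type} {P : A -> Prop} (x y : {a | P a}) : proj1_sig x = proj1_sig y -> x = y.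
Proof. destruct x, y; simpl; intros ->; f_equal; apply proof_irrelevance. Qed.

Lemma oirr {O : WOrd} (x : O) : ~ olt x x.
Proof. apply olt_irrefl. Qed.
Lemma otr {O : WOrd} (x y z : O) : olt x y -> olt y z -> olt x z.
Proof. apply olt_trans. Qed.
Lemma otot {O : WOrd} (x y : O) : olt x y \/ x = y \/ olt y x.
Proof. apply olt_total. Qed.
Lemma oasym {O : WOrd} (x y : O) : olt x y -> olt y x -> False.
Proof. intros H1 H2. exact (oirr x (otr _ _ _ H1 H2)). Qed.
Lemma ole_refl {O : WOrd} (x : O) : ole x x.
Proof. right; reflexivity. Qed.
Lemma ole_trans {O : WOrd} (x y z : O) : ole x y -> ole y z -> ole x z.
Proof. unfold ole; intros [H|H] [H'|H']; subst; auto. left; eapply otr; eauto. Qed.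
Lemma olt_ole {O : WOrd} (x y z : O) : olt x y -> ole y z -> olt x z.
Proof. intros H [H'|H']; subst; auto. eapply otr; eauto. Qed.
Lemma ole_olt {O : WOrd} (x y z : O) : ole x y -> olt y z -> olt x z.
Proof. intros [H|H] H'; subst; auto. eapply otr; eauto. Qed.
Lemma nlt_le {O : WOrd} (x y : O) : ~ olt x y -> ole y x.
Proof. intros H. destruct (otot x y) as [h|[h|h]]; [tauto|subst; right; auto|left; auto]. Qed.
Lemma le_nlt {O : WOrd} (x y : O) : ole x y -> ~ olt y x.
Proof. intros [H|H] H'; subst. eapply oasym; eauto. eapply oirr; eauto. Qed.
Lemma ole_antisym {O : WOrd} (x y : O) : ole x y -> ole y x -> x = y.
Proof. intros [H|H] H'; auto. exfalso; eapply le_nlt; eauto. Qed.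
Lemma nle_lt {O : WOrd} (x y : O) : ~ ole x y -> olt y x.
Proof. intros H. destruct (otot x y) as [h|[h|h]]; auto; exfalso; apply H; [left|right]; auto. Qed.

Lemma least_ex {O : WOrd} (P : O -> Prop) : (exists x, P x) -> exists x, P x /\ forall y, P y -> ole x y.
Proof.
  intros [x0 H0]. apply NNPP; intro Hn.
  assert (forall x, ~ P x) as A.
  { intro x. induction x as [x IH] using (well_founded_ind (olt_wf O)).
    intro Px. apply Hn. exists x. split; auto. intros y Py. apply nlt_le. intro Hy. exact (IH y Hy Py). }
  exact (A x0 H0).
Qed.

Definition least {O : WOrd} (o0 : O) (P : O -> Prop) : O :=
  epsilon (inhabits o0) (fun x => P x /\ forall y, P y -> ole x y).

Lemma least_spec {O : WOrd} (o0 : O) (P : O -> Prop) : (exists x, P x) ->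
  P (least o0 P) /\ forall y, P y -> ole (least o0 P) y.
Proof. intro H. unfold least. apply epsilon_spec. apply least_ex; auto. Qed.

Lemma inj_refl (A : Type) : inj_into A A.
Proof. exists (fun x => x); auto. Qed.
Lemma inj_trans (A B C : Type) : inj_into A B -> inj_into B C -> inj_into A C.
Proof. intros [f Hf] [g Hg]. exists (fun x => g (f x)); auto. Qed.
Lemma inj_prod (A B C D : Type) : inj_into A B -> inj_into C D -> inj_into (A * C) (B * D).
Proof. intros [f Hf] [g Hg]. exists (fun x => (f (fst x), g (snd x))).
  intros [x1 x2] [y1 y2]; simpl; intros E; injection E; intros; f_equal; auto. Qed.
Lemma inj_seg {O : WOrd} (a b : O) : ole a b -> inj_into (seg a) (seg b).
Proof. intros H. exists (fun x : seg a => exist (fun y => olt y b) (proj1_sig x) (olt_ole _ _ _ (proj2_sig x) H)).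
  intros x y E. apply sig_eq. exact (f_equal (@proj1_sig _ _) E). Qed.
Lemma surj_inj (A B : Type) (f : A -> B) : (forall y, exists x, f x = y) -> inj_into B A.
Proof. intros H. destruct (choice (fun y x => f x = y) H) as [g Hg].
  exists g. intros x y E. rewrite <- (Hg x), <- (Hg y), E; auto. Qed.

Definition finT (X : Type) : Prop := exists l : list X, forall x, In x l.

Lemma fin_no_nat (X : Type) : finT X -> ~ inj_into nat X.
Proof.
  intros [l Hl] [e He].
  assert (NoDup (map e (seq 0 (S (length l))))) as ND.
  { apply FinFun.Injective_map_NoDup. intros a b; apply He. apply seq_NoDup. }
  pose proof (NoDup_incl_length ND (fun x _ => Hl x)) as L.
  rewrite length_map, length_seq in L. lia.
Qed.

Lemma fin_prod (X Y : Type) : finT X -> finT Y -> finT (X * Y).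
Proof. intros [l Hl] [m Hm]. exists (list_prod l m). intros [x y]. apply in_prod; auto. Qed.

Lemma fin_inj (X Y : Type) : inj_into X Y -> finT Y -> ~ inj_into nat X.
Proof. intros H F N. apply (fin_no_nat Y F). eapply inj_trans; eauto. Qed.

Fixpoint chain {O : WOrd} (x0 m : O) (n : nat) : O :=
  match n with
  | 0 => x0
  | S k => epsilon (inhabits x0) (fun z => olt (chain x0 m k) z /\ olt z m)
  end.

Lemma chain_spec {O : WOrd} (x0 m : O) : olt x0 m ->
  (forall p, olt p m -> exists x, olt p x /\ olt x m) ->
  forall n, olt (chain x0 m n) m /\ olt (chain x0 m n) (chain x0 m (S n)).
Proof.
  intros H0 Hn.
  assert (forall n, olt (chain x0 m n) m) as A.
  { induction n; simpl; auto. destruct (epsilon_spec (inhabits x0) (fun z => olt (chain x0 m n) z /\ olt z m)) as [_ h]; auto. }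
  intro n; split; auto. simpl. destruct (epsilon_spec (inhabits x0) (fun z => olt (chain x0 m n) z /\ olt z m)) as [h _]; auto.
Qed.

Lemma seg_fin {O : WOrd} (m : O) : ~ inj_into nat (seg m) -> finT (seg m).
Proof.
  induction m as [m IH] using (well_founded_ind (olt_wf O)). intros Hm.
  destruct (classic (exists p, olt p m /\ forall x, olt x m -> ole x p)) as [[p [Hp Hmax]]|Hnm].
  - assert (finT (seg p)) as [l Hl].
    { apply IH; auto. intro N. apply Hm. eapply inj_trans; [exact N|]. apply inj_seg. left; auto. }
    exists (exist (fun y => olt y m) p Hp :: map (fun x : seg p => exist (fun y => olt y m) (proj1_sig x) (otr _ _ _ (proj2_sig x) Hp)) l).
    intros [x Hx]. destruct (Hmax x Hx) as [h|h].
    + right. apply in_map_iff. exists (exist _ x h). split; auto. apply sig_eq; reflexivity.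
    + left. apply sig_eq; simpl; auto.
  - destruct (classic (exists x0, olt x0 m)) as [[x0 H0]|Hno].
    + exfalso. apply Hm.
      assert (forall p, olt p m -> exists x, olt p x /\ olt x m) as Hn.
      { intros p Hp. apply NNPP; intro C. apply Hnm. exists p. split; auto. intros x Hx. apply nlt_le. intro h. apply C. exists x; auto. }
      pose proof (chain_spec x0 m H0 Hn) as CS.
      exists (fun n => exist (fun y => olt y m) (chain x0 m n) (proj1 (CS n))).
      assert (forall n k, olt (chain x0 m n) (chain x0 m (S (k + n)))) as Inc.
      { intros n k; induction k. apply (CS n). eapply otr; [exact IHk|]. apply (CS (S (k + n))). }
      intros a b E. apply (f_equal (@proj1_sig _ _)) in E. simpl in E.
      destruct (Nat.lt_total a b) as [h|[h|h]]; auto; exfalso.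
      * pose proof (Inc a (b - a - 1)) as I. replace (S (b - a - 1 + a)) with b in I by lia. rewrite E in I. eapply oirr; eauto.
      * pose proof (Inc b (a - b - 1)) as I. replace (S (a - b - 1 + b)) with a in I by lia. rewrite E in I. eapply oirr; eauto.
    + exists nil. intros [x Hx]. exfalso. apply Hno; eauto.
Qed.

Lemma le_fin {O : WOrd} (m : O) : finT (seg m) -> finT {x : O | ole x m}.
Proof.
  intros [l Hl]. exists (exist (fun y => ole y m) m (ole_refl m) :: map (fun x : seg m => exist (fun y => ole y m) (proj1_sig x) (or_introl (proj2_sig x))) l).
  intros [x [Hx|Hx]].
  - right. apply in_map_iff. exists (exist _ x Hx). split; auto.
  - left. apply sig_eq; simpl; auto.
Qed.

Lemma shift {O : WOrd} (m : O) : inj_into nat (seg m) -> inj_into {x : O | ole x m} (seg m).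
Proof.
  intros [e He].
  assert (forall x : {x : O | ole x m}, exists y : seg m,
    (proj1_sig x = m /\ y = e 0) \/
    (proj1_sig x <> m /\ exists n, proj1_sig (e n) = proj1_sig x /\ y = e (S n)) \/
    (proj1_sig x <> m /\ (~ exists n, proj1_sig (e n) = proj1_sig x) /\ proj1_sig y = proj1_sig x)) as H.
  { intros [x Hx]. simpl. destruct (classic (x = m)) as [E|NE].
    - exists (e 0); auto.
    - destruct (classic (exists n, proj1_sig (e n) = x)) as [[n Hn]|Nn].
      + exists (e (S n)). right; left. split; auto. exists n; auto.
      + assert (olt x m) as Hl by (destruct Hx; tauto).
        exists (exist _ x Hl). right; right. simpl; auto. }
  destruct (choice _ H) as [g Hg]. exists g.
  intros x x' E. apply sig_eq.
  destruct (Hg x) as [[A1 A2]|[[A1 [n [A2 A3]]]|[A1 [A2 A3]]]];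
  destruct (Hg x') as [[B1 B2]|[[B1 [n' [B2 B3]]]|[B1 [B2 B3]]]]; rewrite E in *.
  all: try congruence.
  - rewrite A2 in B3. apply He in B3. discriminate.
  - exfalso. apply B2. exists 0. rewrite <- A2. auto.
  - rewrite B2 in A3. apply He in A3. discriminate.
  - rewrite A3 in B3. apply He in B3. injection B3; intros; subst. congruence.
  - exfalso. apply B2. exists (S n). rewrite <- A3; auto.
  - exfalso. apply A2. exists 0. rewrite <- B2; congruence.
  - exfalso. apply A2. exists (S n'). rewrite <- B3; congruence.
Qed.

Definition iso_to {O : WOrd} (X : Type) (RX : X -> X -> Prop) (z : O) : Prop :=
  exists f : X -> seg z, (forall y, exists x, f x = y) /\
    (forall x y, RX x y <-> olt (proj1_sig (f x)) (proj1_sig (f y))).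

Definition cbody {O : WOrd} (top : O) (W : Type) (R : W -> W -> Prop) (w : W) (f : forall v, R v w -> O) : O :=
  least top (fun z => forall v (H : R v w), olt (f v H) z).

Lemma collapse {O : WOrd} (W : Type) (R : W -> W -> Prop)
  (Rirr : forall w, ~ R w w) (Rtr : forall a b c, R a b -> R b c -> R a c)
  (Rtot : forall a b, R a b \/ a = b \/ R b a) (Rwf : well_founded R) (top : O)
  (Hyp : forall w z, iso_to {v | R v w} (fun a b => R (proj1_sig a) (proj1_sig b)) z -> olt z top) :
  exists g, ole g top /\ iso_to W R g.
Proof.
  set (F := Fix Rwf (fun _ => O) (cbody top W R)).
  assert (FE : forall w, F w = least top (fun z => forall v, R v w -> olt (F v) z)).
  { intro w. unfold F. rewrite Fix_eq. reflexivity.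
    intros x f g Hfg. assert (f = g) as ->; auto.
    apply functional_extensionality_dep; intro y. apply functional_extensionality_dep; intro p. auto. }
  assert (Q : forall w, olt (F w) top /\ (forall v, R v w -> olt (F v) (F w)) /\
                 (forall z, olt z (F w) -> exists v, R v w /\ F v = z)).
  { intro w. induction w as [w IH] using (well_founded_ind Rwf).
    set (P := fun z => forall v, R v w -> olt (F v) z).
    assert (exists z, P z) as Pe. { exists top. intros v Hv. apply (IH v Hv). }
    destruct (least_spec top P Pe) as [P1 P2]. assert (least top P = F w) as LE by (rewrite FE; reflexivity). rewrite LE in P1, P2.
    assert (Dn : forall z, olt z (F w) -> exists v, R v w /\ F v = z).
    { intros z Hz. assert (~ P z) as NP. { intro Pz. apply (le_nlt _ _ (P2 z Pz) Hz). }
      apply not_all_ex_not in NP. destruct NP as [v Hv].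
      apply imply_to_and in Hv. destruct Hv as [Rv Hv]. apply nlt_le in Hv.
      destruct Hv as [Hv|Hv].
      - destruct (IH v Rv) as [_ [_ D]]. destruct (D z Hv) as [v' [Rv' E]]. exists v'; split; eauto.
      - exists v; auto. }
    split; [|split; auto].
    apply (Hyp w). exists (fun a => exist (fun y => olt y (F w)) (F (proj1_sig a)) (P1 _ (proj2_sig a))).
    split.
    - intros [y Hy]. destruct (Dn y Hy) as [v [Rv E]]. exists (exist _ v Rv). apply sig_eq. simpl; auto.
    - intros [a Ha] [b Hb]; simpl. split.
      + intro Rab. apply (IH b Hb); auto.
      + intro L. destruct (Rtot a b) as [h|[h|h]]; auto.
        * subst. exfalso; eapply oirr; eauto.
        * exfalso. eapply oasym; [exact L|]. apply (IH a Ha); auto. }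
  set (P := fun z => forall w, olt (F w) z).
  assert (exists z, P z) as Pe. { exists top. intro w; apply (Q w). }
  destruct (least_spec top P Pe) as [P1 P2].
  exists (least top P). split. { apply P2. intro w; apply (Q w). }
  exists (fun w => exist (fun y => olt y (least top P)) (F w) (P1 w)). split.
  - intros [y Hy]. assert (~ P y) as NP. { intro Py. apply (le_nlt _ _ (P2 y Py) Hy). }
    apply not_all_ex_not in NP. destruct NP as [w Hw]. apply nlt_le in Hw. destruct Hw as [Hw|Hw].
    + destruct (Q w) as [_ [_ D]]. destruct (D y Hw) as [v [_ E]]. exists v. apply sig_eq; simpl; auto.
    + exists w. apply sig_eq; simpl; auto.
  - intros a b; simpl. split.
    + intro Rab. apply (Q b); auto.
    + intro L. destruct (Rtot a b) as [h|[h|h]]; auto.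
      * subst. exfalso; eapply oirr; eauto.
      * exfalso. eapply oasym; [exact L|]. apply (Q a); auto.
Qed.

Lemma emb_le {O : WOrd} (z w : O) (psi : seg z -> O) :
  (forall a b : seg z, olt (proj1_sig a) (proj1_sig b) -> olt (psi a) (psi b)) ->
  (forall a, olt (psi a) w) -> ole z w.
Proof.
  intros Mono Bd.
  assert (A : forall x (Hx : olt x z), ole x (psi (exist _ x Hx))).
  { intro x. induction x as [x IH] using (well_founded_ind (olt_wf O)). intros Hx.
    apply nlt_le. intro L. set (y := psi (exist _ x Hx)) in *.
    assert (Hy : olt y z) by (eapply otr; eauto).
    pose proof (IH y L Hy) as I.
    pose proof (Mono (exist _ y Hy) (exist _ x Hx) L) as M. simpl in M.
    apply (le_nlt _ _ I M). }
  apply nlt_le. intro L. pose proof (A w L) as I. pose proof (Bd (exist _ w L)) as B.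
  apply (le_nlt _ _ I B).
Qed.

Lemma collapse_emb {O : WOrd} (W : Type) (R : W -> W -> Prop)
  (Rirr : forall w, ~ R w w) (Rtr : forall a b c, R a b -> R b c -> R a c)
  (Rtot : forall a b, R a b \/ a = b \/ R b a) (Rwf : well_founded R) (top : O)
  (phi : W -> O) (Mono : forall v w, R v w -> olt (phi v) (phi w)) (Bd : forall w, olt (phi w) top) :
  exists g, ole g top /\ iso_to W R g.
Proof.
  apply collapse; auto.
  intros w z [f [Sf Of]].
  destruct (choice _ Sf) as [G HG].
  eapply ole_olt; [|exact (Bd w)].
  apply (emb_le z (phi w) (fun a => phi (proj1_sig (G a)))).
  - intros a b L. apply Mono. apply Of. rewrite !HG. exact L.
  - intros a. apply Mono. exact (proj2_sig (G a)).
Qed.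

Lemma iso_inj {O : WOrd} (X : Type) (RX : X -> X -> Prop) (z : O)
  (Rirr : forall w, ~ RX w w) (Rtot : forall a b, RX a b \/ a = b \/ RX b a) :
  iso_to X RX z -> inj_into X (seg z).
Proof.
  intros [f [_ Of]]. exists f. intros x y E.
  destruct (Rtot x y) as [h|[h|h]]; auto; exfalso.
  - apply Of in h. rewrite E in h. eapply oirr; eauto.
  - apply Of in h. rewrite E in h. eapply oirr; eauto.
Qed.

Definition omax {O : WOrd} (x y : O) : O := if excluded_middle_informative (olt x y) then y else x.
Lemma omax_l {O : WOrd} (x y : O) : ole x (omax x y).
Proof. unfold omax; destruct (excluded_middle_informative _); [left; auto|apply ole_refl]. Qed.
Lemma omax_r {O : WOrd} (x y : O) : ole y (omax x y).
Proof. unfold omax; destruct (excluded_middle_informative _); [apply ole_refl|apply nlt_le; auto]. Qed.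
Lemma omax_cases {O : WOrd} (x y : O) : omax x y = x \/ omax x y = y.
Proof. unfold omax; destruct (excluded_middle_informative _); auto. Qed.

Definition lex3 {O : WOrd} {W : Type} (k1 k2 k3 : W -> O) (a b : W) : Prop :=
  olt (k1 a) (k1 b) \/ (k1 a = k1 b /\ (olt (k2 a) (k2 b) \/ (k2 a = k2 b /\ olt (k3 a) (k3 b)))).

Lemma lex3_irr {O : WOrd} {W : Type} (k1 k2 k3 : W -> O) w : ~ lex3 k1 k2 k3 w w.
Proof. unfold lex3; intros [h|[_ [h|[_ h]]]]; eapply oirr; eauto. Qed.
Lemma lex3_tr {O : WOrd} {W : Type} (k1 k2 k3 : W -> O) a b c :
  lex3 k1 k2 k3 a b -> lex3 k1 k2 k3 b c -> lex3 k1 k2 k3 a c.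
Proof.
  unfold lex3; intros [h|[e [h|[e' h]]]] [g|[f [g|[f' g]]]];
  repeat match goal with H : _ = _ |- _ => rewrite H in * end;
  try (left; eapply otr; eauto; fail); try (left; auto; fail);
  right; split; auto; try (left; eapply otr; eauto; fail); try (left; auto; fail);
  right; split; auto; eapply otr; eauto.
Qed.
Lemma lex3_tot {O : WOrd} {W : Type} (k1 k2 k3 : W -> O)
  (Kinj : forall a b, k2 a = k2 b -> k3 a = k3 b -> a = b) a b :
  lex3 k1 k2 k3 a b \/ a = b \/ lex3 k1 k2 k3 b a.
Proof.
  unfold lex3.
  destruct (otot (k1 a) (k1 b)) as [h|[h|h]]; [tauto| |tauto].
  destruct (otot (k2 a) (k2 b)) as [g|[g|g]]; [tauto| |right; right; right; split; auto].
  destruct (otot (k3 a) (k3 b)) as [f|[f|f]]; [tauto|right; left; auto|right; right; right; split; auto].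
Qed.
Lemma lex3_wf {O : WOrd} {W : Type} (k1 k2 k3 : W -> O) : well_founded (lex3 k1 k2 k3).
Proof.
  assert (forall m x y w, k1 w = m -> k2 w = x -> k3 w = y -> Acc (lex3 k1 k2 k3) w) as A.
  { intro m. induction m as [m IHm] using (well_founded_ind (olt_wf O)).
    intro x. induction x as [x IHx] using (well_founded_ind (olt_wf O)).
    intro y. induction y as [y IHy] using (well_founded_ind (olt_wf O)).
    intros w E1 E2 E3. constructor. intros v [h|[e [h|[e' h]]]]; subst.
    - eapply IHm; eauto.
    - eapply IHx; eauto.
    - eapply IHy; eauto. }
  intro w. eapply A; eauto.
Qed.

Lemma hess {O : WOrd} (a : O) : inj_into nat (seg a) -> inj_into (seg a * seg a) (seg a).
Proof.
  intro Ha. apply NNPP; intro C.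
  destruct (least_ex (fun a : O => inj_into nat (seg a) /\ ~ inj_into (seg a * seg a) (seg a))) as [al [[Nal Cal] Min]].
  { exists a; auto. }
  clear a Ha C.
  assert (Min' : forall m, olt m al -> inj_into nat (seg m) -> inj_into (seg m * seg m) (seg m)).
  { intros m Hm Nm. apply NNPP; intro Cm. apply (le_nlt _ _ (Min m (conj Nm Cm)) Hm). }
  set (W := (seg al * seg al)%type).
  set (k1 := fun w : W => omax (proj1_sig (fst w)) (proj1_sig (snd w))).
  set (k2 := fun w : W => proj1_sig (fst w)).
  set (k3 := fun w : W => proj1_sig (snd w)).
  assert (Kinj : forall u v, k2 u = k2 v -> k3 u = k3 v -> u = v).
  { intros [u1 u2] [v1 v2]; unfold k2, k3; simpl; intros E1 E2. f_equal; apply sig_eq; auto. }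
  destruct (collapse W (lex3 k1 k2 k3) (lex3_irr k1 k2 k3) (lex3_tr k1 k2 k3) (lex3_tot k1 k2 k3 Kinj) (lex3_wf k1 k2 k3) al) as [g [Hg Iso]].
  - intros w z Hiso. apply nle_lt. intro Hz.
    destruct Hiso as [f [Sf _]].
    pose proof (surj_inj _ _ f Sf) as I1.
    set (m := k1 w).
    assert (Hm : olt m al).
    { unfold m, k1. destruct (omax_cases (proj1_sig (fst w)) (proj1_sig (snd w))) as [e|e]; rewrite e; apply proj2_sig. }
    assert (Hk : forall v : {v | lex3 k1 k2 k3 v w}, ole (k1 (proj1_sig v)) m).
    { intros v. destruct (proj2_sig v) as [h|[h _]]; [left|right]; auto. }
    assert (I2 : inj_into {v | lex3 k1 k2 k3 v w} ({x : O | ole x m} * {x : O | ole x m})).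
    { exists (fun v => (exist (fun x => ole x m) (k2 (proj1_sig v)) (ole_trans _ _ _ (omax_l _ _) (Hk v)),
                        exist (fun x => ole x m) (k3 (proj1_sig v)) (ole_trans _ _ _ (omax_r _ _) (Hk v)))).
      intros u v E. apply sig_eq. apply Kinj; [exact (f_equal (fun p => proj1_sig (fst p)) E)|exact (f_equal (fun p => proj1_sig (snd p)) E)]. }
    assert (I0 : inj_into (seg al) ({x : O | ole x m} * {x : O | ole x m})).
    { eapply inj_trans; [apply inj_seg; exact Hz|]. eapply inj_trans; [exact I1|exact I2]. }
    destruct (classic (inj_into nat (seg m))) as [Nm|Nm].
    + pose proof (shift m Nm) as Sh.
      assert (I3 : inj_into (seg al) (seg m)).
      { eapply inj_trans; [exact I0|]. eapply inj_trans; [apply inj_prod; exact Sh|]. apply Min'; auto. }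
      apply Cal. eapply inj_trans; [apply inj_prod; exact I3|]. eapply inj_trans; [apply Min'; auto|].
      apply inj_seg; left; auto.
    + pose proof (le_fin m (seg_fin m Nm)) as F.
      exact (fin_inj _ _ I0 (fin_prod _ _ F F) Nal).
  - apply Cal. eapply inj_trans; [eapply iso_inj; [exact (lex3_irr k1 k2 k3)|exact (lex3_tot k1 k2 k3 Kinj)|exact Iso]|].
    apply inj_seg; auto.
Qed.

Lemma card_le {O : WOrd} (lambda lp a : O) : succ_cardinal lambda lp -> olt a lp -> inj_into (seg a) (seg lambda).
Proof.
  intros [Clp [Llp Mlp]] Ha.
  destruct (least_ex (fun c : O => inj_into (seg a) (seg c))) as [c [Hc Mc]].
  { exists a; apply inj_refl. }
  assert (Cc : is_cardinal c).
  { intros b Hb Ib. apply (le_nlt _ _ (Mc b (inj_trans _ _ _ Hc Ib)) Hb). }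
  assert (Hca : ole c a) by (apply Mc; apply inj_refl).
  destruct (classic (ole c lambda)) as [L|L].
  - eapply inj_trans; [exact Hc|]. apply inj_seg; auto.
  - apply nle_lt in L. exfalso. pose proof (Mlp c Cc L) as M.
    apply (le_nlt _ _ (ole_trans _ _ _ M Hca) Ha).
Qed.

Lemma lp_bound {O : WOrd} (kappa lambda lp : O) (X : Type) (a : X -> O) :
  succ_cardinal lambda lp -> inj_into nat (seg lambda) -> olt kappa lambda ->
  inj_into X (seg kappa) -> (forall x, olt (a x) lp) ->
  exists u, olt u lp /\ forall x, ole (a x) u.
Proof.
  intros Hs Hinf Hkl [h Hh] Ha. apply NNPP; intro C.
  assert (Hu : forall u : seg lp, exists x, olt (proj1_sig u) (a x)).
  { intros [u Hu]; simpl. apply NNPP; intro C2. apply C. exists u. split; auto.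
    intro x. apply nlt_le. intro L. apply C2. eauto. }
  destruct (choice _ Hu) as [pick Hpick].
  destruct Hinf as [e0 He0]. set (d := e0 0).
  assert (HJ : forall x, exists j : O -> seg lambda, forall y y', olt y (a x) -> olt y' (a x) -> j y = j y' -> y = y').
  { intro x. destruct (card_le lambda lp (a x) Hs (Ha x)) as [f Hf].
    exists (fun y => match excluded_middle_informative (olt y (a x)) with
                     | left H => f (exist _ y H) | right _ => d end).
    intros y y' H H'. destruct (excluded_middle_informative (olt y (a x))); [|tauto].
    destruct (excluded_middle_informative (olt y' (a x))); [|tauto].
    intro E. apply Hf in E. exact (f_equal (@proj1_sig _ _) E). }
  destruct (choice _ HJ) as [J HJ'].
  destruct Hs as [Clp [Llp _]].
  apply (Clp lambda Llp).
  eapply inj_trans; [|apply (hess lambda); exists e0; auto].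
  eapply inj_trans; [|apply inj_prod; [apply inj_seg; left; exact Hkl|apply inj_refl]].
  exists (fun u => (h (pick u), J (pick u) (proj1_sig u))).
  intros u u' E.
  assert (E1 : pick u = pick u') by (apply Hh; exact (f_equal fst E)).
  pose proof (f_equal snd E) as E2. simpl in E2. rewrite E1 in E2.
  apply sig_eq. apply (HJ' (pick u')); auto. rewrite <- E1; auto.
Qed.

Definition sR {O : WOrd} (A : O -> Prop) (a b : {x : O | A x}) : Prop := olt (proj1_sig a) (proj1_sig b).
Lemma sR_irr {O : WOrd} (A : O -> Prop) w : ~ sR A w w.
Proof. unfold sR; apply oirr. Qed.
Lemma sR_tr {O : WOrd} (A : O -> Prop) a b c : sR A a b -> sR A b c -> sR A a c.
Proof. unfold sR; apply otr. Qed.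
Lemma sR_tot {O : WOrd} (A : O -> Prop) a b : sR A a b \/ a = b \/ sR A b a.
Proof. unfold sR. destruct (otot (proj1_sig a) (proj1_sig b)) as [h|[h|h]]; auto. right; left; apply sig_eq; auto. Qed.
Lemma sR_wf {O : WOrd} (A : O -> Prop) : well_founded (sR A).
Proof. unfold sR. apply (wf_inverse_image _ _ olt (@proj1_sig _ _)). apply olt_wf. Qed.

Lemma collapse_sub {O : WOrd} (A : O -> Prop) (top : O) (phi : {x | A x} -> O)
  (Mono : forall v w, sR A v w -> olt (phi v) (phi w)) (Bd : forall w, olt (phi w) top) :
  exists g, ole g top /\ has_order_type A g.
Proof.
  destruct (collapse_emb _ (sR A) (sR_irr A) (sR_tr A) (sR_tot A) (sR_wf A) top phi Mono Bd) as [g [H1 H2]].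
  exists g; split; auto.
Qed.

Lemma small_bounded {O : WOrd} (li kappa : O) (X : Type) (v : X -> O) :
  regular_cardinal li -> olt kappa li -> inj_into X (seg kappa) -> (forall x, olt (v x) li) ->
  exists z, olt z li /\ forall x, olt (v x) z.
Proof.
  intros [Cli [_ [_ Rli]]] Hk Hx Hv. apply NNPP; intro C.
  assert (U : forall z, olt z li -> exists x, ole z (v x)).
  { intros z Hz. apply NNPP; intro C2. apply C. exists z; split; auto. intro x. apply nle_lt. intro L. apply C2; eauto. }
  set (S := fun y => exists x, v x = y).
  destruct (collapse_sub S li (@proj1_sig _ _) (fun a b h => h)) as [g [Hg Ot]].
  { intros [y [x Ex]]; simpl. subst. auto. }
  assert (Cf : cofinal_type li g).
  { exists S. split; [|split; auto].
    - intros y [x Ex]; subst; auto.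
    - intros z Hz. destruct (U z Hz) as [x Hx']. exists (v x); split; auto. exists x; auto. }
  assert (g = li) as ->.
  { apply ole_antisym; auto. apply nlt_le. intro L. exact (Rli g L Cf). }
  destruct Ot as [f [Sf _]].
  apply (Cli kappa Hk).
  eapply inj_trans; [exact (surj_inj _ _ f Sf)|].
  eapply inj_trans; [|exact Hx].
  assert (forall w : {y | S y}, exists x, v x = proj1_sig w) as Hw by (intros [y Hy]; exact Hy).
  destruct (choice _ Hw) as [k Hk']. exists k. intros a b E. apply sig_eq. rewrite <- Hk', <- (Hk' b), E; auto.
Qed.

Lemma cof_small {O : WOrd} (kappa delta : O) (X : Type) (a : X -> O) :
  inj_into X (seg kappa) -> (forall x, olt (a x) delta) ->
  (forall b, olt b delta -> exists x, ole b (a x)) ->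
  exists g, ole g kappa /\ cofinal_type delta g.
Proof.
  intros [h Hh] Ha Hb.
  set (Aset := fun y => exists x, a x = y).
  set (phi := fun y => least kappa (fun xi => exists x, a x = y /\ proj1_sig (h x) = xi)).
  assert (Phi : forall y, Aset y -> exists x, a x = y /\ proj1_sig (h x) = phi y /\
                  forall x', a x' = y -> ole (phi y) (proj1_sig (h x'))).
  { intros y [x0 E0]. destruct (least_spec kappa (fun xi => exists x, a x = y /\ proj1_sig (h x) = xi)) as [[x [E1 E2]] M].
    { exists (proj1_sig (h x0)); eauto. }
    exists x. split; auto. split; auto. intros x' E'. apply M. eauto. }
  set (B := fun y => Aset y /\ forall y', Aset y' -> olt (phi y') (phi y) -> olt y' y).
  destruct (collapse_sub B kappa (fun w => phi (proj1_sig w))) as [g [Hg Ot]].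
  - intros [v [Av Rv]] [w [Aw Rw]]; unfold sR; simpl. intro L.
    destruct (otot (phi v) (phi w)) as [h1|[h1|h1]]; auto; exfalso.
    + destruct (Phi v Av) as [xv [Ev [Hv _]]]. destruct (Phi w Aw) as [xw [Ew [Hw _]]].
      assert (xv = xw) as Exx. { apply Hh. apply sig_eq. congruence. }
      assert (v = w) as Evw by (rewrite <- Ev, <- Ew, Exx; auto). rewrite Evw in L. eapply oirr; exact L.
    + eapply oasym; [exact L|]. apply Rv; auto.
  - intros w. destruct (proj2_sig w) as [Aw _]. destruct (Phi _ Aw) as [x [_ [E _]]]. rewrite <- E. apply proj2_sig.
  - exists g. split; auto. exists B. split; [|split; auto].
    + intros y [[x E] _]. subst; auto.
    + intros b Hb'.
      destruct (least_spec kappa (fun xi => exists y, Aset y /\ ole b y /\ phi y = xi)) as [[ys [As [Ls Es]]] M].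
      { destruct (Hb b Hb') as [x Hx]. exists (phi (a x)), (a x). split; auto. exists x; auto. }
      exists ys. split; auto. split; auto.
      intros y' A' L'. apply nle_lt. intro C.
      pose proof (M (phi y') (ex_intro _ y' (conj A' (conj (ole_trans _ _ _ Ls C) eq_refl)))) as M'.
      rewrite Es in L'. apply (le_nlt _ _ M' L').
Qed.

Lemma ltstar_combine {O : WOrd} {k : O} (f g h : seg k -> O) (j0 : seg k) :
  ltstar f g -> (forall i : seg k, ole (proj1_sig j0) (proj1_sig i) -> olt (g i) (h i)) -> ltstar f h.
Proof.
  intros [j1 H1] H2.
  destruct (otot (proj1_sig j1) (proj1_sig j0)) as [L|[L|L]].
  - exists j0. intros i Hi. eapply otr; [apply H1; eapply ole_trans; [left; exact L|exact Hi]|apply H2; auto].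
  - exists j0. intros i Hi. eapply otr; [apply H1; rewrite L; exact Hi|apply H2; auto].
  - exists j1. intros i Hi. eapply otr; [apply H1; auto|apply H2; eapply ole_trans; [left; exact L|exact Hi]].
Qed.

Lemma tail_idx {O : WOrd} (lambda kappa : O) (lam : seg kappa -> O) :
  olt kappa lambda -> cof_is lambda kappa ->
  (forall i j : seg kappa, olt (proj1_sig i) (proj1_sig j) -> olt (lam i) (lam j)) ->
  (forall i, regular_cardinal (lam i)) ->
  unbounded_in (fun x => exists i, lam i = x) lambda ->
  exists j0 : seg kappa, forall i : seg kappa, ole (proj1_sig j0) (proj1_sig i) -> olt kappa (lam i).
Proof.
  intros Hkl [_ Cmin] Mono Reg Unb.
  assert (Mle : forall i j : seg kappa, ole (proj1_sig i) (proj1_sig j) -> ole (lam i) (lam j)).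
  { intros i j [L|L]; [left; auto|right; f_equal; apply sig_eq; auto]. }
  destruct (Unb kappa Hkl) as [y [[i0 E0] L0]]. subst y.
  destruct L0 as [L0|L0].
  - exists i0. intros i Hi. eapply olt_ole; eauto.
  - destruct (classic (exists i1 : seg kappa, olt (proj1_sig i0) (proj1_sig i1))) as [[i1 H1]|N].
    + exists i1. intros i Hi. rewrite L0. eapply olt_ole; [apply Mono; exact H1|]. apply Mle; auto.
    + exfalso.
      assert (Top : forall x, olt x lambda -> ole x kappa).
      { intros x Hx. destruct (Unb x Hx) as [y [[i Ei] Li]]. subst y. rewrite L0.
        eapply ole_trans; [exact Li|]. apply Mle. apply nlt_le. intro C. apply N; eauto. }
      destruct (Reg i0) as [_ [Inf _]]. rewrite <- L0 in Inf. destruct Inf as [e He].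
      destruct (least_spec lambda (fun _ => True)) as [_ Z]. { exists lambda; auto. }
      set (z0 := least lambda (fun _ => True)) in *.
      assert (exists y, olt z0 y /\ olt y kappa) as [y [Hy1 Hy2]].
      { destruct (classic (proj1_sig (e 0) = z0)) as [E|E].
        - exists (proj1_sig (e 1)). split; [|apply proj2_sig].
          destruct (Z (proj1_sig (e 1)) I) as [h|h]; auto. exfalso.
          assert (e 0 = e 1) as E' by (apply sig_eq; congruence). apply He in E'. discriminate.
        - exists (proj1_sig (e 0)). split; [|apply proj2_sig].
          destruct (Z (proj1_sig (e 0)) I) as [h|h]; auto. congruence. }
      destruct (least_spec lambda (fun x => olt z0 x)) as [D1 D2]. { eauto. }
      set (d := least lambda (fun x => olt z0 x)) in *.
      apply (Cmin d (olt_ole _ _ _ (ole_olt _ _ _ (D2 y Hy1) Hy2) (ole_refl _))).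
      exists (fun x => x = kappa). split; [|split].
      * intros x ->; auto.
      * intros x Hx. exists kappa; split; auto.
      * exists (fun _ => exist (fun x => olt x d) z0 D1). split.
        -- intros [y' Hy']. exists (exist (fun x => x = kappa) kappa eq_refl). apply sig_eq; simpl.
           apply ole_antisym; [apply Z; auto|]. apply nlt_le. intro C. apply (le_nlt _ _ (D2 _ C) Hy').
        -- intros [x Hx] [x' Hx']; simpl. rewrite Hx, Hx'. split; intro C; exfalso; eapply oirr; eauto.
Qed.

Definition inGbody {O : WOrd} {k : O} (lam : seg k -> O) (lp : O) (p : Cond k) (a : O) : Prop :=
  olt a lp /\
    (forall b, p b <> None <-> ole b a) /\
    forall b f, p b = Some f ->
      (forall i, olt (f i) (lam i)) /\
      (forall g f', olt g b -> p g = Some f' -> ltstar f' f) /\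
      ((exists c, cof_is b c /\ olt k c) -> good_point p b).

Definition glue {O : WOrd} {k : O} (D : Cond k -> Prop) (delta : O) (fnew : seg k -> O) : Cond k :=
  fun b => match excluded_middle_informative (exists p, D p /\ p b <> None) with
  | left H => proj1_sig (constructive_indefinite_description _ H) b
  | right _ => if excluded_middle_informative (b = delta) then Some fnew else None
  end.

Definition compat {O : WOrd} {k : O} (D : Cond k -> Prop) : Prop :=
  forall p q b f f', D p -> D q -> p b = Some f -> q b = Some f' -> f = f'.

Lemma glue_ext {O : WOrd} {k : O} (D : Cond k -> Prop) delta fnew p b f :
  compat D -> D p -> p b = Some f -> glue D delta fnew b = Some f.
Proof.
  intros C Dp Hp. unfold glue. destruct (excluded_middle_informative _) as [H|H].
  - destruct (constructive_indefinite_description _ H) as [q [Dq Nq]]; simpl.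
    destruct (q b) as [s|] eqn:E; [|tauto]. f_equal. exact (C q p b s f Dq Dp E Hp).
  - exfalso. apply H. exists p. split; auto. congruence.
Qed.

Lemma glue_some {O : WOrd} {k : O} (D : Cond k -> Prop) delta fnew b f :
  glue D delta fnew b = Some f -> b <> delta -> exists p, D p /\ p b = Some f.
Proof.
  unfold glue. destruct (excluded_middle_informative _) as [H|H].
  - destruct (constructive_indefinite_description _ H) as [q [Dq Nq]]; simpl. eauto.
  - destruct (excluded_middle_informative (b = delta)); [tauto|discriminate].
Qed.

Lemma glue_delta {O : WOrd} {k : O} (D : Cond k -> Prop) delta fnew :
  (forall p, D p -> p delta = None) -> glue D delta fnew delta = Some fnew.
Proof.
  intros N. unfold glue. destruct (excluded_middle_informative _) as [[p [Dp Hp]]|H].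
  - exfalso. apply Hp; auto.
  - destruct (excluded_middle_informative (delta = delta)); tauto.
Qed.

Lemma glue_none {O : WOrd} {k : O} (D : Cond k -> Prop) delta fnew b :
  (forall p b, D p -> p b <> None -> olt b delta) -> ~ ole b delta -> glue D delta fnew b = None.
Proof.
  intros Hd Hb. unfold glue. destruct (excluded_middle_informative _) as [[p [Dp Hp]]|H].
  - exfalso. apply Hb. left. eapply Hd; eauto.
  - destruct (excluded_middle_informative (b = delta)); auto. exfalso; apply Hb; right; auto.
Qed.

Lemma good_transfer {O : WOrd} {k : O} (p r : Cond k) (b : O) :
  good_point p b -> (forall g fg, olt g b -> r g = Some fg -> p g = Some fg) -> good_point r b.
Proof.
  intros [A [j [H1 [H2 [H3 H4]]]]] Hpr. exists A, j. split; auto. split; auto. split; auto.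
  intros i Hi g g' fg fg' Ag Ag' L Rg Rg'. apply (H4 i Hi g g' fg fg' Ag Ag' L); apply Hpr; auto.
Qed.

Theorem proposition2p9 (O : WOrd) (lambda kappa lambdap : O) (lam : seg kappa -> O) :
  singular_cardinal_of_cof lambda kappa ->
  succ_cardinal lambda lambdap ->
  (forall i j : seg kappa, olt (proj1_sig i) (proj1_sig j) -> olt (lam i) (lam j)) ->
  (forall i, regular_cardinal (lam i)) ->
  (forall i, olt (lam i) lambda) ->
  unbounded_in (fun x => exists i, lam i = x) lambda ->
  G_kappa_plus_directed_closed lam lambdap.
Proof.
  intros [Clam [Ilam [Cof Hkl]]] Hsucc Mono Reg Hlt Unb D HDG Hdir Hcard.
  assert (Compat : compat D).
  { intros p q b f f' Dp Dq Hp Hq. destruct (Hdir p q Dp Dq) as [r [_ [Erp Erq]]].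
    apply Erp in Hp; apply Erq in Hq. congruence. }
  set (aa := fun p => epsilon (inhabits lambda) (fun a => inGbody lam lambdap p a)).
  assert (Haa : forall p, D p -> inGbody lam lambdap p (aa p)).
  { intros p Dp. apply epsilon_spec. exact (HDG p Dp). }
  set (topf := fun p => epsilon (inhabits (fun _ : seg kappa => lambda)) (fun f => p (aa p) = Some f)).
  assert (Htop : forall p, D p -> p (aa p) = Some (topf p)).
  { intros p Dp. unfold topf. apply (epsilon_spec (inhabits (fun _ : seg kappa => lambda)) (fun f => p (aa p) = Some f)). destruct (Haa p Dp) as [_ [Hd _]].
    destruct (p (aa p)) eqn:E; eauto. exfalso. apply (proj2 (Hd (aa p)) (ole_refl _)); auto. }
  destruct (tail_idx lambda kappa lam Hkl Cof Mono Reg Unb) as [j0 Hj0].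
  destruct (lp_bound kappa lambda lambdap {p | D p} (fun p => aa (proj1_sig p)) Hsucc Ilam Hkl Hcard
              (fun p => proj1 (Haa _ (proj2_sig p)))) as [u [Hu Hau]].
  destruct (classic (exists p0, D p0 /\ forall p, D p -> ole (aa p) (aa p0))) as [[p0 [D0 M0]]|NM].
  - exists p0. split; [apply HDG; auto|]. intros p Dp b f Hb.
    destruct (Haa p Dp) as [_ [Hd _]]. assert (ole b (aa p)) as Lb by (apply Hd; congruence).
    destruct (Haa p0 D0) as [_ [Hd0 _]]. destruct (p0 b) as [c|] eqn:E.
    + f_equal. exact (Compat p0 p b c f D0 Dp E Hb).
    + exfalso. apply (proj2 (Hd0 b)); [eapply ole_trans; eauto | auto].
  - assert (Hlt_u : forall p, D p -> olt (aa p) u).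
    { intros p Dp. destruct (Hau (exist _ p Dp)) as [h|h]; auto. exfalso; apply NM. exists p; split; auto.
      intros q Dq. simpl in h. rewrite h. exact (Hau (exist _ q Dq)). }
    set (SU := fun z => forall p, D p -> olt (aa p) z).
    destruct (least_spec lambda SU) as [Sd Md]. { exists u; exact Hlt_u. }
    set (delta := least lambda SU) in *.
    assert (Hdl : olt delta lambdap) by exact (ole_olt _ _ _ (Md u Hlt_u) Hu).
    assert (Below : forall b, olt b delta -> exists p, D p /\ ole b (aa p)).
    { intros b Hb. apply NNPP; intro C. assert (SU b) as Sb.
      { intros p Dp. apply nle_lt; intro L. apply C; eauto. }
      apply (le_nlt _ _ (Md b Sb) Hb). }
    assert (Fex : forall i, exists z, olt z (lam i) /\ (olt kappa (lam i) -> forall p, D p -> olt (topf p i) z)).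
    { intro i. destruct (classic (olt kappa (lam i))) as [K|K].
      - destruct (small_bounded (lam i) kappa {p | D p} (fun p => topf (proj1_sig p) i) (Reg i) K Hcard) as [z [Hz Hz']].
        { intros [p Dp]; simpl. destruct (Haa p Dp) as [_ [_ Hb]]. apply (proj1 (Hb _ _ (Htop p Dp))). }
        exists z; split; auto. intros _ p Dp. exact (Hz' (exist _ p Dp)).
      - destruct (Reg i) as [_ [[e _] _]]. exists (proj1_sig (e 0)). split; [apply proj2_sig| tauto]. }
    destruct (choice _ Fex) as [fnew Hfnew].
    set (r := glue D delta fnew).
    assert (Rext : forall p b f, D p -> p b = Some f -> r b = Some f).
    { intros; eapply glue_ext; eauto. }
    assert (Rlt : forall b f, r b = Some f -> olt b delta -> exists p, D p /\ p b = Some f).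
    { intros b f Hb L. apply (glue_some D delta fnew); auto. intro E; subst b; eapply oirr; eauto. }
    assert (DomP : forall p b, D p -> p b <> None -> olt b delta).
    { intros p b Dp Hb. destruct (Haa p Dp) as [_ [Hd _]]. eapply ole_olt; [apply Hd; exact Hb|apply Sd; auto]. }
    assert (Rdelta : r delta = Some fnew).
    { apply glue_delta. intros p Dp. destruct (p delta) eqn:E; auto. exfalso.
      assert (olt delta delta) by (apply (DomP p); auto; congruence). eapply oirr; eauto. }
    assert (Rnone : forall b, ~ ole b delta -> r b = None).
    { intros b Hb. apply glue_none; auto. }
    exists r. split.
    + exists delta. split; auto. split.
      * intro b. split.
        -- intro Hn. apply NNPP; intro C. apply Hn. apply Rnone; auto.
        -- intros [L|L].
           ++ destruct (Below b L) as [p [Dp Hp]]. destruct (Haa p Dp) as [_ [Hd _]].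
              destruct (p b) eqn:E.
              ** rewrite (Rext p b _ Dp E); discriminate.
              ** exfalso; apply (proj2 (Hd b) Hp); auto.
           ++ subst b; rewrite Rdelta; discriminate.
      * intros b f Hb. destruct (classic (olt b delta)) as [L|L].
        -- destruct (Rlt b f Hb L) as [p [Dp Hp]]. destruct (Haa p Dp) as [_ [Hd Hbody]].
           destruct (Hbody b f Hp) as [B1 [B2 B3]].
           assert (Lb : ole b (aa p)) by (apply Hd; congruence).
           assert (Hpr : forall g fg, olt g b -> r g = Some fg -> p g = Some fg).
           { intros g fg Hg Hrg. destruct (p g) eqn:E.
             - rewrite (Rext p g _ Dp E) in Hrg. exact Hrg.
             - exfalso. apply (proj2 (Hd g)); auto. left; eapply olt_ole; eauto. }
           split; [auto|split].
           ++ intros g f' Hg Hrg. apply (B2 g f' Hg). apply Hpr; auto.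
           ++ intro Hc. apply good_transfer with p; auto.
        -- assert (b = delta) as ->.
           { destruct (classic (ole b delta)) as [[h|h]|h]; auto; try tauto.
             rewrite (Rnone b h) in Hb; discriminate. }
           rewrite Rdelta in Hb. injection Hb as <-.
           split; [intro i; apply (Hfnew i)|split].
           ++ intros g f' Hg Hrg. destruct (Rlt g f' Hrg Hg) as [p [Dp Hp]].
              destruct (Haa p Dp) as [_ [Hd Hbody]].
              assert (ole g (aa p)) as [Lg|Eg] by (apply Hd; congruence).
              ** apply ltstar_combine with (topf p) j0.
                 --- apply (proj1 (proj2 (Hbody _ _ (Htop p Dp)))) with g; auto.
                 --- intros i Hi. apply (proj2 (Hfnew i)); auto.
              ** subst g. rewrite (Htop p Dp) in Hp. injection Hp as <-.
                 exists j0. intros i Hi. apply (proj2 (Hfnew i)); auto.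
           ++ intros [c [Hc Kc]]. exfalso.
              destruct (cof_small kappa delta {p | D p} (fun p => aa (proj1_sig p)) Hcard) as [g [Hg Cg]].
              { intros [p Dp]; simpl. apply Sd; auto. }
              { intros b Hb. destruct (Below b Hb) as [p [Dp Hp]]. exists (exist _ p Dp); auto. }
              destruct Hc as [_ Cm]. apply (Cm g); auto. eapply ole_olt; eauto.
    + intros p Dp b f Hb. eapply Rext; eauto.
Qed.
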